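(* Consider the system of ordinary differential equations \[ \dot u=r_{1}u(1-u)-a_{12}uv-a_{13}uw,\qquad \dot v=r_{2}v(1-v)+a_{21}uv,\qquad \dot w=-\mu w+a_{31}uw, \] with all parameters $r_1,r_2,\mu,a_{12},a_{13},a_{21},a_{31}$ positive. Assume $r_{1}>a_{12}$ and $\mu\ge a_{31}u^*_{12}$, where \[ u^*_{12}=\frac{r_{2}(r_{1}-a_{12})}{r_{1}r_{2}+a_{12}a_{21}},\qquad v^*_{12}=\frac{r_{1}r_{2}+r_{1}a_{21}}{r_{1}r_{2}+a_{12}a_{21}}. \] Then the equilibrium $E_{12}=(u^*_{12},v^*_{12},0)$ exists (lies in the nonnegative orthant with $u^*_{12},v^*_{12}>0$) and it is globally asymptotically stable, i.e. it is stable and every solution with $u(0)>0$, $v(0)>0$, $w(0)\ge 0$ converges to $E_{12}$ as $t\to\infty$.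
   Context: $u,v,w$ denote population densities of three species; solutions are considered in the nonnegative orthant. *)

(* Defs.v *)
From Stdlib Require Import Reals.
From Coquelicot Require Import Coquelicot.
Open Scope R_scope.

Definition is_solution (r1 r2 mu a12 a13 a21 a31 : R) (u v w : R -> R) : Prop :=
  filterlim u (at_right 0) (locally (u 0)) /\
  filterlim v (at_right 0) (locally (v 0)) /\
  filterlim w (at_right 0) (locally (w 0)) /\
  forall t, 0 < t ->
    is_derive u t (r1 * u t * (1 - u t) - a12 * u t * v t - a13 * u t * w t) /\
    is_derive v t (r2 * v t * (1 - v t) + a21 * u t * v t) /\
    is_derive w t (- mu * w t + a31 * u t * w t).

Definition dist3 (x1 x2 x3 y1 y2 y3 : R) : R :=
  sqrt ((x1 - y1) ^ 2 + (x2 - y2) ^ 2 + (x3 - y3) ^ 2).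

Definition u12 (r1 r2 a12 a21 : R) : R :=
  r2 * (r1 - a12) / (r1 * r2 + a12 * a21).
Definition v12 (r1 r2 a12 a21 : R) : R :=
  (r1 * r2 + r1 * a21) / (r1 * r2 + a12 * a21).

(* Main.v *)
Require Import Defs.
From Stdlib Require Import Reals Lra Psatz Classical.
From Coquelicot Require Import Coquelicot.
Open Scope R_scope.

Lemma ln_le_m1 z : 0 < z -> ln z <= z - 1.
Proof. intros Hz. pose proof (exp_ineq1_le (ln z)). rewrite exp_ln in H; lra. Qed.

Definition phi (xs x : R) := x - xs - xs * (ln x - ln xs).

Lemma ln_div' x y : 0 < x -> 0 < y -> ln (x / y) = ln x - ln y.
Proof. intros; apply ln_div; auto. Qed.

Lemma phi_ge0 xs x : 0 < xs -> 0 < x -> 0 <= phi xs x.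
Proof.
  intros Hs Hx. unfold phi.
  assert (H := ln_le_m1 (x / xs) ltac:(apply Rdiv_lt_0_compat; auto)).
  rewrite ln_div' in H by auto.
  assert (xs * (ln x - ln xs) <= xs * (x / xs - 1)) by (apply Rmult_le_compat_l; lra).
  replace (xs * (x / xs - 1)) with (x - xs) in H0 by (field; lra). lra.
Qed.

Lemma phi_lin xs x : 0 < xs -> 0 < x -> x / 2 - xs * ln 2 <= phi xs x.
Proof.
  intros Hs Hx. unfold phi.
  assert (H := ln_le_m1 (x / (2 * xs)) ltac:(apply Rdiv_lt_0_compat; lra)).
  rewrite ln_div', ln_mult in H by lra.
  assert (xs * (ln x - (ln 2 + ln xs)) <= xs * (x / (2 * xs) - 1)) by (apply Rmult_le_compat_l; lra).
  replace (xs * (x / (2 * xs) - 1)) with (x / 2 - xs) in H0 by (field; lra). lra.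
Qed.

Lemma phi_up xs x : 0 < xs -> 0 < x -> phi xs x <= (x - xs) ^ 2 / x.
Proof.
  intros Hs Hx. unfold phi.
  assert (H := ln_le_m1 (xs / x) ltac:(apply Rdiv_lt_0_compat; auto)).
  rewrite ln_div' in H by auto.
  assert (xs * (ln xs - ln x) <= xs * (xs / x - 1)) by (apply Rmult_le_compat_l; lra).
  replace ((x - xs) ^ 2 / x) with (x - xs - xs * (1 - xs / x)) by (field; lra). lra.
Qed.

Lemma phi_sqrt xs x : 0 < xs -> 0 < x -> (sqrt x - sqrt xs) ^ 2 <= phi xs x.
Proof.
  intros Hs Hx. unfold phi.
  pose proof (sqrt_lt_R0 x Hx) as Q1. pose proof (sqrt_lt_R0 xs Hs) as Q2.
  assert (H := ln_le_m1 (sqrt x / sqrt xs) ltac:(apply Rdiv_lt_0_compat; auto)).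
  rewrite ln_div' in H by auto.
  assert (Ex : ln x = 2 * ln (sqrt x)).
  { rewrite <- (sqrt_sqrt x) at 1 by lra. rewrite ln_mult by auto. ring. }
  assert (Es : ln xs = 2 * ln (sqrt xs)).
  { rewrite <- (sqrt_sqrt xs) at 1 by lra. rewrite ln_mult by auto. ring. }
  rewrite Ex, Es.
  assert (xs * (ln (sqrt x) - ln (sqrt xs)) <= xs * (sqrt x / sqrt xs - 1)) by (apply Rmult_le_compat_l; lra).
  replace (xs * (sqrt x / sqrt xs - 1)) with (sqrt xs * sqrt x - xs) in H0.
  2:{ assert (E: sqrt xs * sqrt xs = xs) by (apply sqrt_sqrt; lra).
        set (b := sqrt xs) in *. rewrite <- E. field. lra. }
  assert (sqrt x * sqrt x = x) by (apply sqrt_sqrt; lra).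
  assert (sqrt xs * sqrt xs = xs) by (apply sqrt_sqrt; lra).
  nra.
Qed.

Definition contR (f : R -> R) (t0 : R) := forall eps, 0 < eps -> exists d, 0 < d /\
  forall s, 0 <= s -> Rabs (s - t0) < d -> Rabs (f s - f t0) < eps.

Lemma contR_right0 f : filterlim f (at_right 0) (locally (f 0)) -> contR f 0.
Proof.
  intros H eps Heps.
  destruct (proj1 (filterlim_locally f (f 0)) H (mkposreal eps Heps)) as [d Hd].
  exists d. split. apply cond_pos. intros s Hs Hsd.
  destruct (Req_dec s 0) as [->|Hne].
  - rewrite Rminus_eq_0, Rabs_R0; auto.
  - apply (Hd s). exact Hsd. lra.
Qed.

Lemma contR_deriv f t0 l : is_derive f t0 l -> contR f t0.
Proof.
  intros H eps Heps.
  assert (Hc : continuous f t0) by (apply ex_derive_continuous; eexists; eauto).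
  destruct (proj1 (filterlim_locally f (f t0)) Hc (mkposreal eps Heps)) as [d Hd].
  exists d. split. apply cond_pos. intros s Hs Hsd. apply (Hd s). exact Hsd.
Qed.

Lemma mvt f df a b : a < b -> (forall c, a <= c <= b -> is_derive f c (df c)) ->
  exists c, a < c < b /\ f b - f a = df c * (b - a).
Proof.
  intros Hab H.
  destruct (MVT_cor2 f df a b Hab) as [c [Hc1 Hc2]].
  - intros c Hc. apply is_derive_Reals. auto.
  - exists c; auto.
Qed.

Lemma mvt_le f df a b K : a <= b -> (forall c, a <= c <= b -> is_derive f c (df c)) ->
  (forall c, a <= c <= b -> df c <= K) -> f b - f a <= K * (b - a).
Proof.
  intros Hab H HK. destruct (Req_dec a b) as [->|Hne].
  - lra.
  - destruct (mvt f df a b ltac:(lra) H) as [c [Hc E]]. rewrite E.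
    apply Rmult_le_compat_r. lra. apply HK; lra.
Qed.

Lemma mvt_ge f df a b K : a <= b -> (forall c, a <= c <= b -> is_derive f c (df c)) ->
  (forall c, a <= c <= b -> K <= df c) -> K * (b - a) <= f b - f a.
Proof.
  intros Hab H HK. destruct (Req_dec a b) as [->|Hne].
  - lra.
  - destruct (mvt f df a b ltac:(lra) H) as [c [Hc E]]. rewrite E.
    apply Rmult_le_compat_r. lra. apply HK; lra.
Qed.

Lemma mvt_abs f df a b K : a <= b -> (forall c, a <= c <= b -> is_derive f c (df c)) ->
  (forall c, a <= c <= b -> Rabs (df c) <= K) -> Rabs (f b - f a) <= K * (b - a).
Proof.
  intros Hab H HK.
  pose proof (mvt_le f df a b K Hab H ltac:(intros c Hc; specialize (HK c Hc); apply Rabs_le_between in HK; lra)).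
  pose proof (mvt_ge f df a b (-K) Hab H ltac:(intros c Hc; specialize (HK c Hc); apply Rabs_le_between in HK; lra)).
  apply Rabs_le; lra.
Qed.

Lemma d_mult (f g : R -> R) x df dg : is_derive f x df -> is_derive g x dg ->
  is_derive (fun t => f t * g t) x (df * g x + f x * dg).
Proof. intros H1 H2. exact (is_derive_mult f g x df dg H1 H2 Rmult_comm). Qed.
Lemma d_plus (f g : R -> R) x df dg : is_derive f x df -> is_derive g x dg ->
  is_derive (fun t => f t + g t) x (df + dg).
Proof. intros H1 H2. exact (is_derive_plus f g x df dg H1 H2). Qed.
Lemma d_minus (f g : R -> R) x df dg : is_derive f x df -> is_derive g x dg ->
  is_derive (fun t => f t - g t) x (df - dg).
Proof. intros H1 H2. exact (is_derive_minus f g x df dg H1 H2). Qed.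
Lemma d_ln (f : R -> R) x df : is_derive f x df -> 0 < f x ->
  is_derive (fun t => ln (f t)) x (df / f x).
Proof. intros H1 H2.
  pose proof (is_derive_comp ln f x (/ f x) df (is_derive_ln _ H2) H1) as H.
  replace (df / f x) with (scal df (/ f x)) by reflexivity. exact H. Qed.
Lemma d_eq (f : R -> R) x l l' : is_derive f x l -> l = l' -> is_derive f x l'.
Proof. intros H ->; exact H. Qed.
Lemma d_expl c0 x : is_derive (fun s => exp (c0 * s)) x (c0 * exp (c0 * x)).
Proof. auto_derive; auto; ring. Qed.

Lemma zderiv (y k : R -> R) c0 s : is_derive y s (k s * y s) ->
  is_derive (fun s => y s * y s * exp (c0 * s)) s (y s * y s * exp (c0 * s) * (2 * k s + c0)).
Proof.
  intros H. eapply d_eq. { apply d_mult. apply d_mult; exact H. apply d_expl. } cbv beta. match goal with |- ?a = ?b => change (@eq R a b) end. ring.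
Qed.

Ltac req := cbv beta; match goal with |- ?a = ?b => change (@eq R a b) end.

Lemma zmono_up (y k : R -> R) a b c0 : a <= b ->
  (forall s, a <= s <= b -> is_derive y s (k s * y s)) ->
  (forall s, a <= s <= b -> 0 <= 2 * k s + c0) ->
  y a * y a * exp (c0 * a) <= y b * y b * exp (c0 * b).
Proof.
  intros Hab Hd Hk.
  pose proof (mvt_ge (fun s => y s * y s * exp (c0 * s))
    (fun s => y s * y s * exp (c0 * s) * (2 * k s + c0)) a b 0 Hab
    ltac:(intros c Hc; apply zderiv; auto)
    ltac:(intros c Hc; specialize (Hk c Hc); pose proof (exp_pos (c0 * c));
          apply Rmult_le_pos; [apply Rmult_le_pos; [nra|lra]|lra])).
  simpl in H. lra.
Qed.

Lemma zmono_down (y k : R -> R) a b c0 : a <= b ->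
  (forall s, a <= s <= b -> is_derive y s (k s * y s)) ->
  (forall s, a <= s <= b -> 2 * k s + c0 <= 0) ->
  y b * y b * exp (c0 * b) <= y a * y a * exp (c0 * a).
Proof.
  intros Hab Hd Hk.
  pose proof (mvt_le (fun s => y s * y s * exp (c0 * s))
    (fun s => y s * y s * exp (c0 * s) * (2 * k s + c0)) a b 0 Hab
    ltac:(intros c Hc; apply zderiv; auto)
    ltac:(intros c Hc; specialize (Hk c Hc); pose proof (exp_pos (c0 * c));
          assert (0 <= y c * y c * exp (c0 * c)) by (apply Rmult_le_pos; [nra|lra]); nra)).
  simpl in H. lra.
Qed.

Lemma first_fail (P : R -> Prop) t1 : 0 <= t1 -> ~ P t1 ->
  exists t0, 0 <= t0 <= t1 /\ (forall s, 0 <= s < t0 -> P s) /\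
    (forall eta, 0 < eta -> exists s, t0 <= s < t0 + eta /\ s <= t1 /\ ~ P s).
Proof.
  intros Ht1 HP.
  destruct (classic (P 0)) as [H0|H0].
  2:{ exists 0. split. lra. split. intros; lra. intros eta He. exists 0. repeat split; lra || auto. }
  set (E := fun t => 0 <= t <= t1 /\ forall s, 0 <= s <= t -> P s).
  assert (Hb : bound E) by (exists t1; intros t [Ht _]; lra).
  assert (He : exists x, E x) by (exists 0; split; [lra| intros s Hs; replace s with 0 by lra; auto]).
  destruct (completeness E Hb He) as [m [Hup Hlub]].
  assert (Hm0 : 0 <= m) by (apply Hup; destruct He; unfold E; split; [lra|intros s Hs; replace s with 0 by lra; auto]).
  assert (Hm1 : m <= t1) by (apply Hlub; intros t [Ht _]; lra).
  assert (Hfirst : forall s, 0 <= s < m -> P s).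
  { intros s Hs. destruct (classic (exists t, E t /\ s < t)) as [[t [[Ht Hall] Hst]]|Hno].
    - apply Hall; lra.
    - exfalso. assert (m <= s). { apply Hlub. intros t Et. destruct (Rle_dec t s); auto.
        exfalso; apply Hno; exists t; split; auto; lra. } lra. }
  exists m. split. lra. split. exact Hfirst.
  intros eta Heta. apply NNPP. intros Hno.
  assert (Hall : forall s, m <= s < m + eta -> s <= t1 -> P s).
  { intros s Hs Hs1. apply NNPP. intros HnP. apply Hno. exists s. auto. }
  set (t' := Rmin (m + eta / 2) t1).
  assert (Et' : E t').
  { unfold E, t'. split. split. apply Rmin_glb; lra. apply Rmin_r.
    intros s Hs. destruct (Rlt_dec s m). apply Hfirst; lra.
    apply Hall. split. lra. pose proof (Rmin_l (m + eta / 2) t1). lra.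
    pose proof (Rmin_r (m + eta / 2) t1). lra. }
  pose proof (Hup t' Et'). unfold t' in H.
  destruct (Rle_dec (m + eta / 2) t1).
  - rewrite Rmin_left in H by lra. lra.
  - rewrite Rmin_right in H by lra. apply HP. apply Hall; lra.
Qed.

Definition locbd (k : R -> R) := forall t, 0 <= t -> exists d M, 0 < d /\
  forall s, 0 <= s -> Rabs (s - t) < d -> Rabs (k s) <= M.

Lemma pos_pres (y k : R -> R) : (forall t, 0 <= t -> contR y t) ->
  (forall t, 0 < t -> is_derive y t (k t * y t)) -> locbd k ->
  0 < y 0 -> forall t, 0 <= t -> 0 < y t.
Proof.
  intros Hc Hd Hk Hy0 t1 Ht1. apply NNPP. intros Hn.
  destruct (first_fail (fun s => 0 < y s) t1 Ht1 Hn) as [t0 [Ht0 [Hf Hsd]]].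
  assert (Hz : y t0 = 0).
  { destruct (Rtotal_order (y t0) 0) as [Hl|[He|Hg]]; auto; exfalso.
    - assert (Ht0p : 0 < t0) by (destruct (Req_dec t0 0) as [E|E]; [subst; lra|lra]).
      destruct (Hc t0 ltac:(lra) (- y t0) ltac:(lra)) as [d [Hd0 Hdd]].
      set (s := t0 - Rmin d t0 / 2).
      assert (Hmd := Rmin_l d t0). assert (Hmt := Rmin_r d t0).
      assert (0 < Rmin d t0) by (apply Rmin_glb_lt; lra).
      assert (Hs0 : 0 <= s < t0) by (unfold s; lra).
      specialize (Hf s Hs0). specialize (Hdd s ltac:(lra) ltac:(unfold s; rewrite Rabs_left; lra)).
      apply Rabs_def2 in Hdd. lra.
    - destruct (Hc t0 ltac:(lra) (y t0) Hg) as [d [Hd0 Hdd]].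
      destruct (Hsd d Hd0) as [s [Hs1 [Hs2 Hs3]]]. apply Hs3.
      specialize (Hdd s ltac:(lra) ltac:(rewrite Rabs_right; lra)).
      apply Rabs_def2 in Hdd. lra. }
  assert (Ht0p : 0 < t0) by (destruct (Req_dec t0 0) as [E|E]; [subst; lra|lra]).
  destruct (Hk t0 ltac:(lra)) as [d [M [Hd0 HM]]].
  set (a := t0 - Rmin d t0 / 2).
  assert (Hmd := Rmin_l d t0). assert (Hmt := Rmin_r d t0).
  assert (0 < Rmin d t0) by (apply Rmin_glb_lt; lra).
  assert (Ha : 0 < a < t0) by (unfold a; lra).
  pose proof (zmono_up y k a t0 (2 * M) ltac:(lra)
    ltac:(intros s Hs; apply Hd; lra)
    ltac:(intros s Hs; specialize (HM s ltac:(lra) ltac:(rewrite Rabs_left1; unfold a in *; lra));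
          apply Rabs_le_between in HM; lra)) as Hz2.
  rewrite Hz in Hz2. pose proof (Hf a ltac:(lra)). pose proof (exp_pos (2 * M * a)).
  assert (0 < y a * y a * exp (2 * M * a)) by (apply Rmult_lt_0_compat; nra).
  lra.
Qed.

Lemma nonneg_pres (y k : R -> R) : (forall t, 0 <= t -> contR y t) ->
  (forall t, 0 < t -> is_derive y t (k t * y t)) -> locbd k ->
  0 <= y 0 -> forall t, 0 <= t -> 0 <= y t.
Proof.
  intros Hc Hd Hk Hy0 t1 Ht1. apply NNPP. intros Hn.
  destruct (first_fail (fun s => 0 <= y s) t1 Ht1 Hn) as [t0 [Ht0 [Hf Hsd]]].
  assert (Hz : y t0 = 0).
  { destruct (Rtotal_order (y t0) 0) as [Hl|[He|Hg]]; auto; exfalso.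
    - assert (Ht0p : 0 < t0) by (destruct (Req_dec t0 0) as [E|E]; [subst; lra|lra]).
      destruct (Hc t0 ltac:(lra) (- y t0) ltac:(lra)) as [d [Hd0 Hdd]].
      set (s := t0 - Rmin d t0 / 2).
      assert (Hmd := Rmin_l d t0). assert (Hmt := Rmin_r d t0).
      assert (0 < Rmin d t0) by (apply Rmin_glb_lt; lra).
      assert (Hs0 : 0 <= s < t0) by (unfold s; lra).
      specialize (Hf s Hs0). specialize (Hdd s ltac:(lra) ltac:(unfold s; rewrite Rabs_left; lra)).
      apply Rabs_def2 in Hdd. lra.
    - destruct (Hc t0 ltac:(lra) (y t0) Hg) as [d [Hd0 Hdd]].
      destruct (Hsd d Hd0) as [s [Hs1 [Hs2 Hs3]]]. apply Hs3.
      specialize (Hdd s ltac:(lra) ltac:(rewrite Rabs_right; lra)).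
      apply Rabs_def2 in Hdd. lra. }
  destruct (Hk t0 ltac:(lra)) as [d [M [Hd0 HM]]].
  assert (HM0 : 0 <= M) by (specialize (HM t0 ltac:(lra) ltac:(rewrite Rminus_eq_0, Rabs_R0; lra));
     pose proof (Rabs_pos (k t0)); lra).
  destruct (Hsd d Hd0) as [s1 [Hs1 [Hs2 Hs3]]].
  assert (Hs1' : t0 < s1) by (destruct (Req_dec t0 s1) as [E|E]; [subst; lra|lra]).
  set (Z := y s1 * y s1 * exp (-2 * M * s1)).
  assert (HZ : 0 < Z) by (unfold Z; apply Rmult_lt_0_compat; [nra|apply exp_pos]).
  set (eps := Rmin 1 (Z / 2)).
  assert (He1 := Rmin_l 1 (Z / 2)). assert (He2 := Rmin_r 1 (Z / 2)).
  assert (Heps : 0 < eps) by (apply Rmin_glb_lt; lra).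
  destruct (Hc t0 ltac:(lra) eps Heps) as [d' [Hd'0 Hd'd]].
  set (r := t0 + Rmin d' (s1 - t0) / 2).
  assert (Hm1 := Rmin_l d' (s1 - t0)). assert (Hm2 := Rmin_r d' (s1 - t0)).
  assert (0 < Rmin d' (s1 - t0)) by (apply Rmin_glb_lt; lra).
  assert (Hr : t0 < r <= s1) by (unfold r; lra).
  pose proof (zmono_down y k r s1 (-2 * M) ltac:(lra)
    ltac:(intros s Hs; apply Hd; lra)
    ltac:(intros s Hs; specialize (HM s ltac:(lra) ltac:(rewrite Rabs_right; lra));
          apply Rabs_le_between in HM; lra)) as Hz2.
  specialize (Hd'd r ltac:(lra) ltac:(rewrite Rabs_right; unfold r; lra)).
  rewrite Hz, Rminus_0_r in Hd'd.
  assert (Hexp : exp (-2 * M * r) <= 1).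
  { rewrite <- exp_0. destruct (Req_dec M 0) as [->|]. right; f_equal; ring.
    left; apply exp_increasing; nra. }
  assert (y r * y r <= eps * eps).
  { apply Rabs_def2 in Hd'd. nra. }
  assert (y r * y r * exp (-2 * M * r) <= y r * y r * 1).
  { apply Rmult_le_compat_l. nra. lra. }
  assert (E1 : eps <= 1) by (unfold eps; apply Rmin_l).
  assert (E2 : eps <= Z / 2) by (unfold eps; apply Rmin_r).
  assert (eps * eps <= eps * 1) by (apply Rmult_le_compat_l; lra).
  unfold Z in *. lra.
Qed.

Lemma gconv (y G : R -> R) K T0 : 0 < K ->
  (forall s t, T0 <= s <= t -> Rabs (y t - y s) <= K * (t - s)) ->
  (forall d, 0 < d -> exists T, forall s t, T <= s <= t -> G s - G t < d) ->
  (forall e, 0 < e -> exists c T1, 0 < c /\ forall s t, T1 <= s <= t ->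
     (forall r, s <= r <= t -> e / 2 <= Rabs (y r)) -> c * (t - s) <= G s - G t) ->
  forall e, 0 < e -> exists T, forall t, T <= t -> Rabs (y t) < e.
Proof.
  intros HK HL HC HD e He.
  destruct (HD e He) as [c [T1 [Hc Hdrop]]].
  set (tau := e / (2 * K)).
  assert (Htau : 0 < tau) by (unfold tau; apply Rdiv_lt_0_compat; lra).
  destruct (HC (c * tau) ltac:(nra)) as [T HT].
  exists (Rmax T0 (Rmax T T1)). intros t Ht.
  assert (H1 := Rmax_l T0 (Rmax T T1)). assert (H2 := Rmax_r T0 (Rmax T T1)).
  assert (H3 := Rmax_l T T1). assert (H4 := Rmax_r T T1).
  apply Rnot_le_lt. intros Hy.
  assert (Hr : forall r, t <= r <= t + tau -> e / 2 <= Rabs (y r)).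
  { intros r Hr. specialize (HL t r ltac:(lra)).
    assert (K * (r - t) <= K * tau) by (apply Rmult_le_compat_l; lra).
    assert (K * tau = e / 2) by (unfold tau; field; lra).
    pose proof (Rabs_triang_inv (y t) (y t - y r)).
    replace (y t - (y t - y r)) with (y r) in H5 by ring.
    rewrite <- Rabs_Ropp in HL. replace (- (y r - y t)) with (y t - y r) in HL by ring. lra. }
  specialize (Hdrop t (t + tau) ltac:(lra) Hr).
  specialize (HT t (t + tau) ltac:(lra)).
  replace (t + tau - t) with tau in Hdrop by ring. lra.
Qed.

Lemma mono_cau (V : R -> R) T0 L : (forall s t, T0 <= s <= t -> V t <= V s) ->
  (forall t, T0 <= t -> L <= V t) ->
  forall d, 0 < d -> exists T, forall s t, T <= s <= t -> V s - V t < d.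
Proof.
  intros Hm HL d Hd.
  set (E := fun x => exists t, T0 <= t /\ x = - V t).
  assert (Hb : bound E) by (exists (- L); intros x [t [Ht ->]]; specialize (HL t Ht); lra).
  assert (He : exists x, E x) by (exists (- V T0); exists T0; split; [lra|auto]).
  destruct (completeness E Hb He) as [m [Hup Hlub]].
  destruct (classic (exists t, T0 <= t /\ m - d < - V t)) as [[t [Ht Hlt]]|Hno].
  - exists t. intros s r Hsr.
    assert (V s <= V t) by (apply Hm; lra).
    assert (- V r <= m) by (apply Hup; exists r; split; [lra|auto]). lra.
  - exfalso. assert (m <= m - d); [|lra].
    apply Hlub. intros x [t [Ht ->]]. destruct (Rle_dec (- V t) (m - d)); auto.
    exfalso; apply Hno; exists t; split; auto; lra.
Qed.

Lemma lim_of (f : R -> R) l : (forall e, 0 < e -> exists T, forall t, T <= t -> Rabs (f t - l) < e) ->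
  is_lim f p_infty l.
Proof.
  intros H. apply is_lim_spec. intros eps. destruct (H eps (cond_pos eps)) as [T HT].
  exists T. intros x Hx. apply HT. lra.
Qed.


Lemma sol_contR r1 r2 mu a12 a13 a21 a31 u v w :
  is_solution r1 r2 mu a12 a13 a21 a31 u v w ->
  (forall t, 0 <= t -> contR u t) /\ (forall t, 0 <= t -> contR v t) /\ (forall t, 0 <= t -> contR w t).
Proof.
  intros [Hu0 [Hv0 [Hw0 Hd]]].
  split; [|split]; intros t Ht; destruct (Req_dec t 0) as [->|Hne];
    try (apply contR_right0; assumption);
    destruct (Hd t ltac:(lra)) as [H1 [H2 H3]]; eapply contR_deriv; eauto.
Qed.

Lemma locbd_lin (u v w : R -> R) c0 c1 c2 c3 :
  (forall t, 0 <= t -> contR u t) -> (forall t, 0 <= t -> contR v t) -> (forall t, 0 <= t -> contR w t) ->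
  locbd (fun t => c0 + c1 * u t + c2 * v t + c3 * w t).
Proof.
  intros Hu Hv Hw t Ht.
  destruct (Hu t Ht 1 Rlt_0_1) as [d1 [Hd1 H1]].
  destruct (Hv t Ht 1 Rlt_0_1) as [d2 [Hd2 H2]].
  destruct (Hw t Ht 1 Rlt_0_1) as [d3 [Hd3 H3]].
  exists (Rmin d1 (Rmin d2 d3)).
  exists (Rabs c0 + Rabs c1 * (Rabs (u t) + 1) + Rabs c2 * (Rabs (v t) + 1) + Rabs c3 * (Rabs (w t) + 1)).
  assert (Hm1 := Rmin_l d1 (Rmin d2 d3)). assert (Hm2 := Rmin_r d1 (Rmin d2 d3)).
  assert (Hm3 := Rmin_l d2 d3). assert (Hm4 := Rmin_r d2 d3).
  split. apply Rmin_glb_lt; auto. apply Rmin_glb_lt; auto.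
  intros s Hs Hsd.
  specialize (H1 s Hs ltac:(lra)). specialize (H2 s Hs ltac:(lra)). specialize (H3 s Hs ltac:(lra)).
  assert (B1 : Rabs (u s) <= Rabs (u t) + 1) by (pose proof (Rabs_triang_inv (u s) (u t)); lra).
  assert (B2 : Rabs (v s) <= Rabs (v t) + 1) by (pose proof (Rabs_triang_inv (v s) (v t)); lra).
  assert (B3 : Rabs (w s) <= Rabs (w t) + 1) by (pose proof (Rabs_triang_inv (w s) (w t)); lra).
  eapply Rle_trans. apply Rabs_triang. eapply Rle_trans. apply Rplus_le_compat_r. apply Rabs_triang.
  eapply Rle_trans. apply Rplus_le_compat_r. apply Rplus_le_compat_r. apply Rabs_triang.
  rewrite !Rabs_mult.
  pose proof (Rabs_pos c1). pose proof (Rabs_pos c2). pose proof (Rabs_pos c3).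
  assert (Rabs c1 * Rabs (u s) <= Rabs c1 * (Rabs (u t) + 1)) by (apply Rmult_le_compat_l; lra).
  assert (Rabs c2 * Rabs (v s) <= Rabs c2 * (Rabs (v t) + 1)) by (apply Rmult_le_compat_l; lra).
  assert (Rabs c3 * Rabs (w s) <= Rabs c3 * (Rabs (w t) + 1)) by (apply Rmult_le_compat_l; lra).
  lra.
Qed.

Lemma sol_pos r1 r2 mu a12 a13 a21 a31 u v w :
  is_solution r1 r2 mu a12 a13 a21 a31 u v w ->
  0 < u 0 -> 0 < v 0 -> 0 <= w 0 ->
  forall t, 0 <= t -> 0 < u t /\ 0 < v t /\ 0 <= w t.
Proof.
  intros Hs Hu0 Hv0 Hw0.
  destruct (sol_contR _ _ _ _ _ _ _ _ _ _ Hs) as [Cu [Cv Cw]].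
  destruct Hs as [_ [_ [_ Hd]]].
  intros t Ht. split; [|split].
  - apply (pos_pres u (fun t => r1 + (- r1) * u t + (- a12) * v t + (- a13) * w t)); auto.
    + intros s Hs0. eapply d_eq. apply (proj1 (Hd s Hs0)). req; ring.
    + apply locbd_lin; auto.
  - apply (pos_pres v (fun t => r2 + a21 * u t + (- r2) * v t + 0 * w t)); auto.
    + intros s Hs0. eapply d_eq. apply (proj1 (proj2 (Hd s Hs0))). req; ring.
    + apply locbd_lin; auto.
  - apply (nonneg_pres w (fun t => - mu + a31 * u t + 0 * v t + 0 * w t)); auto.
    + intros s Hs0. eapply d_eq. apply (proj2 (proj2 (Hd s Hs0))). req; ring.
    + apply locbd_lin; auto.
Qed.

Lemma d_phi (f : R -> R) t df xs : is_derive f t df -> 0 < f t ->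
  is_derive (fun s => phi xs (f s)) t (df - xs * (df / f t)).
Proof.
  intros H Hp. unfold phi.
  eapply d_eq.
  { apply d_minus. apply d_minus. exact H. apply (is_derive_const xs).
    apply (is_derive_scal (fun s => ln (f s) - ln xs)). apply d_minus. apply d_ln; [exact H|exact Hp].
    apply (is_derive_const (ln xs)). }
  req. simpl. unfold zero; simpl. ring.
Qed.

Definition Lyap (r1 r2 mu a12 a13 a21 a31 us vs : R) (u v w : R -> R) (t : R) :=
  a21 * a31 * phi us (u t) + a12 * a31 * phi vs (v t) + a13 * a21 * w t.
Definition dLyap (r1 r2 mu a12 a13 a21 a31 us vs : R) (u v w : R -> R) (t : R) :=
  - (a21 * a31 * r1) * (u t - us) ^ 2 - a12 * a31 * r2 * (v t - vs) ^ 2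
  - a13 * a21 * (mu - a31 * us) * w t.

Lemma lyap_deriv r1 r2 mu a12 a13 a21 a31 us vs u v w :
  r1 * (1 - us) - a12 * vs = 0 -> r2 * (1 - vs) + a21 * us = 0 ->
  is_solution r1 r2 mu a12 a13 a21 a31 u v w ->
  forall t, 0 < t -> 0 < u t -> 0 < v t ->
  is_derive (Lyap r1 r2 mu a12 a13 a21 a31 us vs u v w) t (dLyap r1 r2 mu a12 a13 a21 a31 us vs u v w t).
Proof.
  intros E1 E2 [_ [_ [_ Hd]]] t Ht Hu Hv.
  destruct (Hd t Ht) as [Du [Dv Dw]].
  unfold Lyap. eapply d_eq.
  { apply d_plus. apply d_plus.
    apply (is_derive_scal (fun s => phi us (u s))). apply d_phi; eauto.
    apply (is_derive_scal (fun s => phi vs (v s))). apply d_phi; eauto.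
    apply (is_derive_scal w). eauto. }
  req. unfold dLyap.
  set (U := u t) in *. set (V := v t) in *. set (W := w t) in *.
  transitivity (- (a21 * a31 * r1) * (U - us) ^ 2 - a12 * a31 * r2 * (V - vs) ^ 2
    - a13 * a21 * (mu - a31 * us) * W + a21 * a31 * (U - us) * (r1 * (1 - us) - a12 * vs)
    + a12 * a31 * (V - vs) * (r2 * (1 - vs) + a21 * us)).
  - field. split; lra.
  - rewrite E1, E2. ring.
Qed.

Lemma dist_coord a b c x y z d : dist3 a b c x y z < d ->
  Rabs (a - x) < d /\ Rabs (b - y) < d /\ Rabs (c - z) < d.
Proof.
  unfold dist3. intros H.
  assert (Ha : Rabs (a - x) <= sqrt ((a - x) ^ 2 + (b - y) ^ 2 + (c - z) ^ 2)).
  { rewrite <- sqrt_Rsqr_abs. apply sqrt_le_1_alt. unfold Rsqr. pose proof (pow2_ge_0 (a - x)). pose proof (pow2_ge_0 (b - y)). pose proof (pow2_ge_0 (c - z)). simpl in *. lra. }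
  assert (Hb : Rabs (b - y) <= sqrt ((a - x) ^ 2 + (b - y) ^ 2 + (c - z) ^ 2)).
  { rewrite <- sqrt_Rsqr_abs. apply sqrt_le_1_alt. unfold Rsqr. pose proof (pow2_ge_0 (a - x)). pose proof (pow2_ge_0 (b - y)). pose proof (pow2_ge_0 (c - z)). simpl in *. lra. }
  assert (Hc : Rabs (c - z) <= sqrt ((a - x) ^ 2 + (b - y) ^ 2 + (c - z) ^ 2)).
  { rewrite <- sqrt_Rsqr_abs. apply sqrt_le_1_alt. unfold Rsqr. pose proof (pow2_ge_0 (a - x)). pose proof (pow2_ge_0 (b - y)). pose proof (pow2_ge_0 (c - z)). simpl in *. lra. }
  lra.
Qed.

Lemma sq_lt_of_abs q e : Rabs q < e -> q ^ 2 < e ^ 2.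
Proof. intros H. apply Rabs_def2 in H. nra. Qed.

Lemma dist_small a b c x y z eta eps : 0 < eta -> 2 * eta <= eps ->
  Rabs (a - x) < eta -> Rabs (b - y) < eta -> Rabs (c - z) < eta -> dist3 a b c x y z < eps.
Proof.
  intros He Hee H1 H2 H3. unfold dist3.
  apply sq_lt_of_abs in H1. apply sq_lt_of_abs in H2. apply sq_lt_of_abs in H3.
  rewrite <- (sqrt_pow2 eps) by lra.
  pose proof (pow2_ge_0 (a - x)). pose proof (pow2_ge_0 (b - y)). pose proof (pow2_ge_0 (c - z)).
  assert (E : (2 * eta) ^ 2 <= eps ^ 2) by (apply pow_incr; lra).
  replace ((2 * eta) ^ 2) with (4 * eta ^ 2) in E by ring.
  assert (0 < eta ^ 2) by (apply pow_lt; lra).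
  apply sqrt_lt_1; lra.
Qed.

Lemma abs_of_sq q e : 0 < e -> q ^ 2 < e ^ 2 -> Rabs q < e.
Proof.
  intros He H. apply Rnot_le_lt. intros Hc.
  assert (e ^ 2 <= Rabs q ^ 2) by (apply pow_incr; lra).
  rewrite RPow_abs, Rabs_right in H0 by (apply Rle_ge, pow2_ge_0). lra.
Qed.

Lemma sqrt_close x xs eta : 0 < xs -> 0 < x -> 0 < eta ->
  (sqrt x - sqrt xs) ^ 2 < Rmin xs (eta ^ 2 / (9 * xs)) -> Rabs (x - xs) < eta.
Proof.
  intros Hs Hx He H.
  assert (M1 := Rmin_l xs (eta ^ 2 / (9 * xs))). assert (M2 := Rmin_r xs (eta ^ 2 / (9 * xs))).
  set (a := sqrt x) in *. set (b := sqrt xs) in *.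
  assert (Ea : a * a = x) by (apply sqrt_sqrt; lra).
  assert (Eb : b * b = xs) by (apply sqrt_sqrt; lra).
  assert (Ha : 0 <= a) by apply sqrt_pos. assert (Hb : 0 < b) by (apply sqrt_lt_R0; lra).
  assert (H1 : (a - b) ^ 2 < b * b) by lra.
  assert (H2 : a < 2 * b) by nra.
  assert (H3 : (a + b) ^ 2 < 9 * xs) by nra.
  assert (H4 : (a - b) ^ 2 * 9 * xs < eta ^ 2).
  { assert ((a - b) ^ 2 * (9 * xs) < eta ^ 2 / (9 * xs) * (9 * xs)).
    apply Rmult_lt_compat_r; lra. replace (eta ^ 2 / (9 * xs) * (9 * xs)) with (eta ^ 2) in H0 by (field; lra). lra. }
  assert (H5 : (x - xs) ^ 2 < eta ^ 2).
  { rewrite <- Ea, <- Eb. replace ((a * a - b * b) ^ 2) with ((a - b) ^ 2 * (a + b) ^ 2) by ring.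
    pose proof (pow2_ge_0 (a - b)).
    assert ((a - b) ^ 2 * (a + b) ^ 2 <= (a - b) ^ 2 * (9 * xs)) by (apply Rmult_le_compat_l; lra). lra. }
  apply abs_of_sq; lra.
Qed.

Definition Hyp r1 r2 mu a12 a13 a21 a31 us vs (u v w : R -> R) :=
  0 < r1 /\ 0 < r2 /\ 0 < mu /\ 0 < a12 /\ 0 < a13 /\ 0 < a21 /\ 0 < a31 /\
  0 < us /\ 0 < vs /\ r1 * (1 - us) - a12 * vs = 0 /\ r2 * (1 - vs) + a21 * us = 0 /\
  a31 * us <= mu /\ is_solution r1 r2 mu a12 a13 a21 a31 u v w /\
  (forall t, 0 <= t -> 0 < u t /\ 0 < v t /\ 0 <= w t).

Ltac dhyp H := destruct H as [hr1 [hr2 [hmu [ha12 [ha13 [ha21 [ha31 [Hus [Hvs [E1 [E2 [Hmu [Hsol Hpos]]]]]]]]]]]]].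

Lemma V_lower r1 r2 mu a12 a13 a21 a31 us vs u v w :
  Hyp r1 r2 mu a12 a13 a21 a31 us vs u v w -> forall t, 0 <= t ->
  a21 * a31 * phi us (u t) <= Lyap r1 r2 mu a12 a13 a21 a31 us vs u v w t /\
  a12 * a31 * phi vs (v t) <= Lyap r1 r2 mu a12 a13 a21 a31 us vs u v w t /\
  a13 * a21 * w t <= Lyap r1 r2 mu a12 a13 a21 a31 us vs u v w t.
Proof.
  intros H. dhyp H. intros t Ht. destruct (Hpos t Ht) as [Pu [Pv Pw]].
  pose proof (phi_ge0 us (u t) Hus Pu). pose proof (phi_ge0 vs (v t) Hvs Pv).
  assert (0 <= a21 * a31 * phi us (u t)) by (apply Rmult_le_pos; [nra|lra]).
  assert (0 <= a12 * a31 * phi vs (v t)) by (apply Rmult_le_pos; [nra|lra]).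
  assert (0 <= a13 * a21 * w t) by (apply Rmult_le_pos; [nra|lra]).
  unfold Lyap. lra.
Qed.

Lemma dV_le r1 r2 mu a12 a13 a21 a31 us vs u v w :
  Hyp r1 r2 mu a12 a13 a21 a31 us vs u v w -> forall t, 0 <= t ->
  dLyap r1 r2 mu a12 a13 a21 a31 us vs u v w t <= - (a21 * a31 * r1) * (u t - us) ^ 2 /\
  dLyap r1 r2 mu a12 a13 a21 a31 us vs u v w t <= - (a12 * a31 * r2) * (v t - vs) ^ 2.
Proof.
  intros H. dhyp H. intros t Ht. destruct (Hpos t Ht) as [Pu [Pv Pw]].
  pose proof (pow2_ge_0 (u t - us)). pose proof (pow2_ge_0 (v t - vs)).
  assert (0 <= a21 * a31 * r1 * (u t - us) ^ 2) by (apply Rmult_le_pos; [|lra]; apply Rmult_le_pos; nra).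
  assert (0 <= a12 * a31 * r2 * (v t - vs) ^ 2) by (apply Rmult_le_pos; [|lra]; apply Rmult_le_pos; nra).
  assert (0 <= a13 * a21 * (mu - a31 * us) * w t) by (apply Rmult_le_pos; [|lra]; apply Rmult_le_pos; nra).
  unfold dLyap. lra.
Qed.

Lemma V_deriv r1 r2 mu a12 a13 a21 a31 us vs u v w :
  Hyp r1 r2 mu a12 a13 a21 a31 us vs u v w -> forall t, 0 < t ->
  is_derive (Lyap r1 r2 mu a12 a13 a21 a31 us vs u v w) t (dLyap r1 r2 mu a12 a13 a21 a31 us vs u v w t).
Proof.
  intros H. dhyp H. intros t Ht. destruct (Hpos t ltac:(lra)) as [Pu [Pv Pw]].
  apply lyap_deriv; auto.
Qed.

Lemma V_mono r1 r2 mu a12 a13 a21 a31 us vs u v w :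
  Hyp r1 r2 mu a12 a13 a21 a31 us vs u v w -> forall s t, 0 < s <= t ->
  Lyap r1 r2 mu a12 a13 a21 a31 us vs u v w t <= Lyap r1 r2 mu a12 a13 a21 a31 us vs u v w s.
Proof.
  intros H s t Hst.
  pose proof (mvt_le _ _ s t 0 ltac:(lra) ltac:(intros c Hc; apply (V_deriv _ _ _ _ _ _ _ _ _ _ _ _ H); lra)
    ltac:(intros c Hc; destruct (dV_le _ _ _ _ _ _ _ _ _ _ _ _ H c ltac:(lra)) as [D1 _];
          dhyp H; assert (0 <= a21 * a31 * r1 * (u c - us) ^ 2) by
            (apply Rmult_le_pos; [|apply pow2_ge_0]; apply Rmult_le_pos; nra); lra)).
  lra.
Qed.

Lemma frac_bd x xs rho : 0 < xs -> 0 < rho -> rho <= 1 -> rho <= xs / 2 -> Rabs (x - xs) < rho ->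
  0 < x /\ (x - xs) ^ 2 / x <= 2 * rho / xs.
Proof.
  intros Hs Hr Hr1 Hr2 H. apply Rabs_def2 in H.
  assert (Hx : xs / 2 <= x) by lra. split. lra.
  assert (Hq : (x - xs) ^ 2 <= rho) by (simpl; nra).
  assert (H1 : (x - xs) ^ 2 / x <= rho / x).
  { unfold Rdiv. apply Rmult_le_compat_r. left; apply Rinv_0_lt_compat; lra. lra. }
  assert (H2 : / x <= / (xs / 2)) by (apply Rinv_le_contravar; lra).
  assert (H3 : rho / x <= rho * / (xs / 2)) by (unfold Rdiv; apply Rmult_le_compat_l; lra).
  replace (rho * / (xs / 2)) with (2 * rho / xs) in H3 by (field; lra). lra.
Qed.

Lemma le_div_of A p V : 0 < A -> A * p <= V -> p <= V / A.
Proof. intros HA H. apply (Rmult_le_reg_l A); auto. replace (A * (V / A)) with V by (field; lra). lra. Qed.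

Lemma lt_div_of A p V : 0 < A -> A * p < V -> p < V / A.
Proof. intros HA H. apply (Rmult_lt_reg_l A); auto. replace (A * (V / A)) with V by (field; lra). lra. Qed.

Lemma half_div m Q : 0 < Q -> m / (2 * Q) * Q = m / 2.
Proof. intros; field; lra. Qed.

Lemma stab r1 r2 mu a12 a13 a21 a31 us vs :
  0 < r1 -> 0 < r2 -> 0 < mu -> 0 < a12 -> 0 < a13 -> 0 < a21 -> 0 < a31 ->
  0 < us -> 0 < vs -> r1 * (1 - us) - a12 * vs = 0 -> r2 * (1 - vs) + a21 * us = 0 ->
  a31 * us <= mu ->
  forall eps, 0 < eps -> exists delta, 0 < delta /\
     forall u v w : R -> R,
       is_solution r1 r2 mu a12 a13 a21 a31 u v w ->
       0 <= u 0 -> 0 <= v 0 -> 0 <= w 0 ->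
       dist3 (u 0) (v 0) (w 0) us vs 0 < delta ->
       forall t, 0 <= t -> dist3 (u t) (v t) (w t) us vs 0 < eps.
Proof.
  intros hr1 hr2 hmu ha12 ha13 ha21 ha31 Hus Hvs E1 E2 Hmu eps Heps.
  set (eta := eps / 2).
  set (A := a21 * a31). set (B := a12 * a31). set (C := a13 * a21).
  assert (HA : 0 < A) by (unfold A; nra). assert (HB : 0 < B) by (unfold B; nra).
  assert (HC : 0 < C) by (unfold C; nra). assert (Heta : 0 < eta) by (unfold eta; lra).
  set (mu_ := Rmin us (eta ^ 2 / (9 * us))). set (mv_ := Rmin vs (eta ^ 2 / (9 * vs))).
  assert (Hmu_ : 0 < mu_) by (apply Rmin_glb_lt; [lra|apply Rdiv_lt_0_compat; [apply pow_lt|]; lra]).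
  assert (Hmv_ : 0 < mv_) by (apply Rmin_glb_lt; [lra|apply Rdiv_lt_0_compat; [apply pow_lt|]; lra]).
  set (m := Rmin (A * mu_) (Rmin (B * mv_) (C * eta))).
  assert (Hm1 : m <= A * mu_) by apply Rmin_l.
  assert (Hm2 : m <= B * mv_) by (eapply Rle_trans; [apply Rmin_r|apply Rmin_l]).
  assert (Hm3 : m <= C * eta) by (eapply Rle_trans; [apply Rmin_r|apply Rmin_r]).
  assert (Hm : 0 < m) by (apply Rmin_glb_lt; [nra|apply Rmin_glb_lt; nra]).
  set (Q := 2 * A / us + 2 * B / vs + C).
  assert (HQ : 0 < Q).
  { unfold Q. assert (0 < 2 * A / us) by (apply Rdiv_lt_0_compat; lra).
    assert (0 < 2 * B / vs) by (apply Rdiv_lt_0_compat; lra). lra. }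
  set (rho := Rmin 1 (Rmin (us / 2) (Rmin (vs / 2) (m / (2 * Q))))).
  assert (R1 : rho <= 1) by apply Rmin_l.
  assert (R2 : rho <= us / 2) by (eapply Rle_trans; [apply Rmin_r|apply Rmin_l]).
  assert (R3 : rho <= vs / 2) by (eapply Rle_trans; [apply Rmin_r|]; eapply Rle_trans; [apply Rmin_r|apply Rmin_l]).
  assert (R4 : rho <= m / (2 * Q)) by (eapply Rle_trans; [apply Rmin_r|]; eapply Rle_trans; [apply Rmin_r|apply Rmin_r]).
  assert (Hrho : 0 < rho).
  { apply Rmin_glb_lt. lra. apply Rmin_glb_lt. lra. apply Rmin_glb_lt. lra.
    apply Rdiv_lt_0_compat; lra. }
  exists (Rmin (rho / 2) eps). split. apply Rmin_glb_lt; lra.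
  assert (D1 := Rmin_l (rho / 2) eps). assert (D2 := Rmin_r (rho / 2) eps).
  intros u v w Hsol Hu0 Hv0 Hw0 Hd t Ht.
  destruct (dist_coord _ _ _ _ _ _ _ Hd) as [C1 [C2 C3]].
  rewrite Rminus_0_r in C3.
  assert (Pu0 : 0 < u 0) by (apply Rabs_def2 in C1; lra).
  assert (Pv0 : 0 < v 0) by (apply Rabs_def2 in C2; lra).
  pose proof (sol_pos _ _ _ _ _ _ _ _ _ _ Hsol Pu0 Pv0 Hw0) as Hpos.
  assert (HH : Hyp r1 r2 mu a12 a13 a21 a31 us vs u v w) by (unfold Hyp; tauto).
  destruct (Req_dec t 0) as [->|Htn0]. lra.
  destruct (sol_contR _ _ _ _ _ _ _ _ _ _ Hsol) as [Cu [Cv Cw]].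
  destruct (Cu 0 ltac:(lra) (rho / 2) ltac:(lra)) as [du [Hdu Hu]].
  destruct (Cv 0 ltac:(lra) (rho / 2) ltac:(lra)) as [dv [Hdv Hv]].
  destruct (Cw 0 ltac:(lra) (rho / 2) ltac:(lra)) as [dw [Hdw Hw]].
  set (s := Rmin t (Rmin du (Rmin dv dw) / 2)).
  assert (S0 : 0 < Rmin du (Rmin dv dw)) by (apply Rmin_glb_lt; [lra|apply Rmin_glb_lt; lra]).
  assert (S1 : s <= t) by apply Rmin_l.
  assert (S2 : s <= Rmin du (Rmin dv dw) / 2) by apply Rmin_r.
  assert (S3 : 0 < s) by (apply Rmin_glb_lt; lra).
  assert (S4 := Rmin_l du (Rmin dv dw)). assert (S5 := Rmin_r du (Rmin dv dw)).
  assert (S6 := Rmin_l dv dw). assert (S7 := Rmin_r dv dw).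
  assert (Hs : Rabs (s - 0) = s) by (rewrite Rminus_0_r; apply Rabs_right; lra).
  specialize (Hu s ltac:(lra) ltac:(lra)). specialize (Hv s ltac:(lra) ltac:(lra)).
  specialize (Hw s ltac:(lra) ltac:(lra)).
  assert (Us : Rabs (u s - us) < rho).
  { apply Rabs_def2 in Hu. apply Rabs_def2 in C1. apply Rabs_def1; lra. }
  assert (Vs : Rabs (v s - vs) < rho).
  { apply Rabs_def2 in Hv. apply Rabs_def2 in C2. apply Rabs_def1; lra. }
  assert (Ws : w s < rho).
  { apply Rabs_def2 in Hw. apply Rabs_def2 in C3. lra. }
  destruct (frac_bd (u s) us rho Hus Hrho R1 R2 Us) as [Pus Fu].
  destruct (frac_bd (v s) vs rho Hvs Hrho R1 R3 Vs) as [Pvs Fv].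
  pose proof (phi_up us (u s) Hus Pus). pose proof (phi_up vs (v s) Hvs Pvs).
  assert (Lsm : Lyap r1 r2 mu a12 a13 a21 a31 us vs u v w s < m).
  { unfold Lyap. fold A B C.
    assert (A * phi us (u s) <= A * (2 * rho / us)) by (apply Rmult_le_compat_l; lra).
    assert (B * phi vs (v s) <= B * (2 * rho / vs)) by (apply Rmult_le_compat_l; lra).
    assert (C * w s <= C * rho) by (apply Rmult_le_compat_l; lra).
    assert (A * (2 * rho / us) + B * (2 * rho / vs) + C * rho = rho * Q) by (unfold Q; field; lra).
    assert (HQ2 : rho * Q <= m / (2 * Q) * Q) by (apply Rmult_le_compat_r; lra).
    rewrite (half_div m Q HQ) in HQ2. lra. }
  pose proof (V_mono _ _ _ _ _ _ _ _ _ _ _ _ HH s t ltac:(lra)) as Hmono.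
  destruct (V_lower _ _ _ _ _ _ _ _ _ _ _ _ HH t Ht) as [L1 [L2 L3]]. fold A B C in L1, L2, L3.
  destruct (Hpos t Ht) as [Put [Pvt Pwt]].
  apply (dist_small _ _ _ _ _ _ eta); [lra|unfold eta; lra| | |].
  - apply sqrt_close; auto. eapply Rle_lt_trans. apply phi_sqrt; auto.
    apply (Rmult_lt_reg_l A); auto. change (A * phi us (u t) < A * mu_). lra.
  - apply sqrt_close; auto. eapply Rle_lt_trans. apply phi_sqrt; auto.
    apply (Rmult_lt_reg_l B); auto. change (B * phi vs (v t) < B * mv_). lra.
  - rewrite Rminus_0_r, Rabs_right by lra. apply (Rmult_lt_reg_l C); auto. lra.
Qed.

Lemma prod_bd x y X Y : 0 <= x <= X -> 0 <= y <= Y -> 0 <= x * y <= X * Y.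
Proof. intros. split. apply Rmult_le_pos; lra. apply Rmult_le_compat; lra. Qed.

Lemma bd_u r1 a12 a13 U V W Ub Vb Wb : 0 < r1 -> 0 < a12 -> 0 < a13 ->
  0 <= U <= Ub -> 0 <= V <= Vb -> 0 <= W <= Wb ->
  Rabs (r1 * U * (1 - U) - a12 * U * V - a13 * U * W) <=
  r1 * Ub + r1 * (Ub * Ub) + a12 * (Ub * Vb) + a13 * (Ub * Wb).
Proof.
  intros h1 h2 h3 HU HV HW.
  pose proof (prod_bd _ _ _ _ HU HU). pose proof (prod_bd _ _ _ _ HU HV). pose proof (prod_bd _ _ _ _ HU HW).
  assert (r1 * U <= r1 * Ub) by (apply Rmult_le_compat_l; lra).
  assert (r1 * (U * U) <= r1 * (Ub * Ub)) by (apply Rmult_le_compat_l; lra).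
  assert (a12 * (U * V) <= a12 * (Ub * Vb)) by (apply Rmult_le_compat_l; lra).
  assert (a13 * (U * W) <= a13 * (Ub * Wb)) by (apply Rmult_le_compat_l; lra).
  assert (0 <= r1 * U) by (apply Rmult_le_pos; lra).
  assert (0 <= r1 * (U * U)) by (apply Rmult_le_pos; lra).
  assert (0 <= a12 * (U * V)) by (apply Rmult_le_pos; lra).
  assert (0 <= a13 * (U * W)) by (apply Rmult_le_pos; lra).
  replace (r1 * U * (1 - U) - a12 * U * V - a13 * U * W) with
    (r1 * U - r1 * (U * U) - a12 * (U * V) - a13 * (U * W)) by ring.
  apply Rabs_le. lra.
Qed.

Lemma bd_v r2 a21 U V Ub Vb : 0 < r2 -> 0 < a21 ->
  0 <= U <= Ub -> 0 <= V <= Vb ->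
  Rabs (r2 * V * (1 - V) + a21 * U * V) <= r2 * Vb + r2 * (Vb * Vb) + a21 * (Ub * Vb).
Proof.
  intros h1 h2 HU HV.
  pose proof (prod_bd _ _ _ _ HV HV). pose proof (prod_bd _ _ _ _ HU HV).
  assert (r2 * V <= r2 * Vb) by (apply Rmult_le_compat_l; lra).
  assert (r2 * (V * V) <= r2 * (Vb * Vb)) by (apply Rmult_le_compat_l; lra).
  assert (a21 * (U * V) <= a21 * (Ub * Vb)) by (apply Rmult_le_compat_l; lra).
  assert (0 <= r2 * V) by (apply Rmult_le_pos; lra).
  assert (0 <= r2 * (V * V)) by (apply Rmult_le_pos; lra).
  assert (0 <= a21 * (U * V)) by (apply Rmult_le_pos; lra).
  replace (r2 * V * (1 - V) + a21 * U * V) with (r2 * V - r2 * (V * V) + a21 * (U * V)) by ring.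
  apply Rabs_le. lra.
Qed.

Lemma bd_w mu a31 U W Ub Wb : 0 < mu -> 0 < a31 ->
  0 <= U <= Ub -> 0 <= W <= Wb ->
  Rabs (- mu * W + a31 * U * W) <= mu * Wb + a31 * (Ub * Wb).
Proof.
  intros h1 h2 HU HW.
  pose proof (prod_bd _ _ _ _ HU HW).
  assert (mu * W <= mu * Wb) by (apply Rmult_le_compat_l; lra).
  assert (a31 * (U * W) <= a31 * (Ub * Wb)) by (apply Rmult_le_compat_l; lra).
  assert (0 <= mu * W) by (apply Rmult_le_pos; lra).
  assert (0 <= a31 * (U * W)) by (apply Rmult_le_pos; lra).
  replace (- mu * W + a31 * U * W) with (- (mu * W) + a31 * (U * W)) by ring.
  apply Rabs_le. lra.
Qed.

Lemma sq_ge_of_abs q e : 0 <= e -> e <= Rabs q -> e ^ 2 <= q ^ 2.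
Proof.
  intros He H. assert (e ^ 2 <= Rabs q ^ 2) by (apply pow_incr; lra).
  rewrite RPow_abs, Rabs_right in H0 by (apply Rle_ge, pow2_ge_0). lra.
Qed.

Lemma conv r1 r2 mu a12 a13 a21 a31 us vs u v w :
  Hyp r1 r2 mu a12 a13 a21 a31 us vs u v w ->
  is_lim u p_infty us /\ is_lim v p_infty vs /\ is_lim w p_infty 0.
Proof.
  intros HH. pose proof HH as HH'. dhyp HH'.
  set (L := Lyap r1 r2 mu a12 a13 a21 a31 us vs u v w).
  set (A := a21 * a31). set (B := a12 * a31). set (C := a13 * a21).
  assert (HA : 0 < A) by (unfold A; nra). assert (HB : 0 < B) by (unfold B; nra).
  assert (HC : 0 < C) by (unfold C; nra).
  set (V1 := L 1).
  assert (Lb : forall t, 1 <= t -> L t <= V1) by (intros t Ht; apply (V_mono _ _ _ _ _ _ _ _ _ _ _ _ HH); lra).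
  set (Ub := 2 * (V1 / A + us * ln 2)). set (Vb := 2 * (V1 / B + vs * ln 2)). set (Wb := V1 / C).
  assert (Bnd : forall t, 1 <= t -> 0 <= u t <= Ub /\ 0 <= v t <= Vb /\ 0 <= w t <= Wb).
  { intros t Ht. destruct (Hpos t ltac:(lra)) as [Pu [Pv Pw]].
    destruct (V_lower _ _ _ _ _ _ _ _ _ _ _ _ HH t ltac:(lra)) as [L1 [L2 L3]].
    fold L A B C in L1, L2, L3. specialize (Lb t Ht).
    pose proof (phi_lin us (u t) Hus Pu). pose proof (phi_lin vs (v t) Hvs Pv).
    assert (phi us (u t) <= V1 / A) by (apply le_div_of; auto; lra).
    assert (phi vs (v t) <= V1 / B) by (apply le_div_of; auto; lra).
    assert (w t <= V1 / C) by (apply le_div_of; auto; lra).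
    unfold Ub, Vb, Wb. lra. }
  set (Ku := r1 * Ub + r1 * (Ub * Ub) + a12 * (Ub * Vb) + a13 * (Ub * Wb) + 1).
  set (Kv := r2 * Vb + r2 * (Vb * Vb) + a21 * (Ub * Vb) + 1).
  set (Kw := mu * Wb + a31 * (Ub * Wb) + 1).
  destruct Hsol as [_ [_ [_ Hd]]].
  assert (Lu : forall s t, 1 <= s <= t -> Rabs (u t - u s) <= Ku * (t - s)).
  { intros s t Hst. apply (mvt_abs u (fun c => r1 * u c * (1 - u c) - a12 * u c * v c - a13 * u c * w c)).
    lra. intros c Hc. apply (Hd c ltac:(lra)).
    intros c Hc. destruct (Bnd c ltac:(lra)) as [B1 [B2 B3]].
    pose proof (bd_u r1 a12 a13 _ _ _ _ _ _ hr1 ha12 ha13 B1 B2 B3). unfold Ku. lra. }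
  assert (Lv : forall s t, 1 <= s <= t -> Rabs (v t - v s) <= Kv * (t - s)).
  { intros s t Hst. apply (mvt_abs v (fun c => r2 * v c * (1 - v c) + a21 * u c * v c)).
    lra. intros c Hc. apply (Hd c ltac:(lra)).
    intros c Hc. destruct (Bnd c ltac:(lra)) as [B1 [B2 B3]].
    pose proof (bd_v r2 a21 _ _ _ _ hr2 ha21 B1 B2). unfold Kv. lra. }
  assert (Lw : forall s t, 1 <= s <= t -> Rabs (w t - w s) <= Kw * (t - s)).
  { intros s t Hst. apply (mvt_abs w (fun c => - mu * w c + a31 * u c * w c)).
    lra. intros c Hc. apply (Hd c ltac:(lra)).
    intros c Hc. destruct (Bnd c ltac:(lra)) as [B1 [B2 B3]].
    pose proof (bd_w mu a31 _ _ _ _ hmu ha31 B1 B3). unfold Kw. lra. }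
  assert (HKu : 0 < Ku).
  { destruct (Bnd 1 ltac:(lra)) as [B1 [B2 B3]].
    pose proof (bd_u r1 a12 a13 _ _ _ _ _ _ hr1 ha12 ha13 B1 B2 B3). pose proof (Rabs_pos (r1 * u 1 * (1 - u 1) - a12 * u 1 * v 1 - a13 * u 1 * w 1)). unfold Ku. lra. }
  assert (HKv : 0 < Kv).
  { destruct (Bnd 1 ltac:(lra)) as [B1 [B2 B3]].
    pose proof (bd_v r2 a21 _ _ _ _ hr2 ha21 B1 B2). pose proof (Rabs_pos (r2 * v 1 * (1 - v 1) + a21 * u 1 * v 1)). unfold Kv. lra. }
  assert (HKw : 0 < Kw).
  { destruct (Bnd 1 ltac:(lra)) as [B1 [B2 B3]].
    pose proof (bd_w mu a31 _ _ _ _ hmu ha31 B1 B3). pose proof (Rabs_pos (- mu * w 1 + a31 * u 1 * w 1)). unfold Kw. lra. }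
  assert (CauV : forall d, 0 < d -> exists T, forall s t, T <= s <= t -> L s - L t < d).
  { apply (mono_cau L 1 0).
    - intros s t Hst. apply (V_mono _ _ _ _ _ _ _ _ _ _ _ _ HH). lra.
    - intros t Ht. destruct (V_lower _ _ _ _ _ _ _ _ _ _ _ _ HH t ltac:(lra)) as [L1 [L2 L3]].
      destruct (Hpos t ltac:(lra)) as [Pu [Pv Pw]].
      pose proof (phi_ge0 us (u t) Hus Pu). fold L A in L1. assert (0 <= A * phi us (u t)) by (apply Rmult_le_pos; lra). lra. }
  assert (Cu : forall e, 0 < e -> exists T, forall t, T <= t -> Rabs (u t - us) < e).
  { apply (gconv (fun t => u t - us) L Ku 1 HKu).
    - intros s t Hst. replace (u t - us - (u s - us)) with (u t - u s) by ring. auto.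
    - exact CauV.
    - intros e He. exists (A * r1 * (e / 2) ^ 2), 1. split.
      apply Rmult_lt_0_compat. nra. apply pow_lt; lra.
      intros s t Hst Hr.
      pose proof (mvt_le L (dLyap r1 r2 mu a12 a13 a21 a31 us vs u v w) s t (- (A * r1 * (e / 2) ^ 2)) ltac:(lra)
        ltac:(intros c Hc; apply (V_deriv _ _ _ _ _ _ _ _ _ _ _ _ HH); lra)
        ltac:(intros c Hc; destruct (dV_le _ _ _ _ _ _ _ _ _ _ _ _ HH c ltac:(lra)) as [D1 _];
              pose proof (sq_ge_of_abs (u c - us) (e / 2) ltac:(lra) (Hr c Hc));
              fold A in D1; assert (A * r1 * (e / 2) ^ 2 <= A * r1 * (u c - us) ^ 2) by
                (apply Rmult_le_compat_l; [nra|lra]); lra)).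
      lra. }
  assert (Cv : forall e, 0 < e -> exists T, forall t, T <= t -> Rabs (v t - vs) < e).
  { apply (gconv (fun t => v t - vs) L Kv 1 HKv).
    - intros s t Hst. replace (v t - vs - (v s - vs)) with (v t - v s) by ring. auto.
    - exact CauV.
    - intros e He. exists (B * r2 * (e / 2) ^ 2), 1. split.
      apply Rmult_lt_0_compat. nra. apply pow_lt; lra.
      intros s t Hst Hr.
      pose proof (mvt_le L (dLyap r1 r2 mu a12 a13 a21 a31 us vs u v w) s t (- (B * r2 * (e / 2) ^ 2)) ltac:(lra)
        ltac:(intros c Hc; apply (V_deriv _ _ _ _ _ _ _ _ _ _ _ _ HH); lra)
        ltac:(intros c Hc; destruct (dV_le _ _ _ _ _ _ _ _ _ _ _ _ HH c ltac:(lra)) as [_ D1];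
              pose proof (sq_ge_of_abs (v c - vs) (e / 2) ltac:(lra) (Hr c Hc));
              fold B in D1; assert (B * r2 * (e / 2) ^ 2 <= B * r2 * (v c - vs) ^ 2) by
                (apply Rmult_le_compat_l; [nra|lra]); lra)).
      lra. }
  assert (Cw : forall e, 0 < e -> exists T, forall t, T <= t -> Rabs (w t) < e).
  { apply (gconv w u Kw 1 HKw Lw).
    - intros d Hd0. destruct (Cu (d / 2) ltac:(lra)) as [T HT]. exists T. intros s t Hst.
      pose proof (HT s ltac:(lra)). pose proof (HT t ltac:(lra)).
      apply Rabs_def2 in H. apply Rabs_def2 in H0. lra.
    - intros e He.
      set (h1 := Rmin (us / 2) (a13 * e / (8 * r1))).
      assert (Hh1 : 0 < h1) by (apply Rmin_glb_lt; [lra|apply Rdiv_lt_0_compat; nra]).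
      assert (Hh1a : h1 <= us / 2) by apply Rmin_l.
      assert (Hh1b : h1 <= a13 * e / (8 * r1)) by apply Rmin_r.
      destruct (Cu h1 Hh1) as [Tu HTu].
      destruct (Cv (a13 * e / (8 * a12)) ltac:(apply Rdiv_lt_0_compat; nra)) as [Tv HTv].
      exists (us * a13 * e / 8), (Rmax 1 (Rmax Tu Tv)). split.
      apply Rdiv_lt_0_compat; [|lra]. apply Rmult_lt_0_compat; nra.
      intros s t Hst Hr.
      assert (M1 := Rmax_l 1 (Rmax Tu Tv)). assert (M2 := Rmax_r 1 (Rmax Tu Tv)).
      assert (M3 := Rmax_l Tu Tv). assert (M4 := Rmax_r Tu Tv).
      pose proof (mvt_le u (fun c => r1 * u c * (1 - u c) - a12 * u c * v c - a13 * u c * w c) s t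
        (- (us * a13 * e / 8)) ltac:(lra)
        ltac:(intros c Hc; apply (Hd c ltac:(lra)))) as Hm.
      assert (Hm' : u t - u s <= - (us * a13 * e / 8) * (t - s)); [|lra].
      apply Hm. intros c Hc.
      specialize (HTu c ltac:(lra)). specialize (HTv c ltac:(lra)). specialize (Hr c Hc).
      destruct (Hpos c ltac:(lra)) as [Pu [Pv Pw]].
      rewrite Rabs_right in Hr by lra.
      apply Rabs_def2 in HTu. apply Rabs_def2 in HTv.
      assert (X1 : - (r1 * (u c - us)) < a13 * e / 8).
      { assert (r1 * (- (u c - us)) < r1 * (a13 * e / (8 * r1))) by (apply Rmult_lt_compat_l; lra).
        replace (r1 * (a13 * e / (8 * r1))) with (a13 * e / 8) in H by (field; lra). lra. }
      assert (X2 : - (a12 * (v c - vs)) < a13 * e / 8).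
      { assert (a12 * (- (v c - vs)) < a12 * (a13 * e / (8 * a12))) by (apply Rmult_lt_compat_l; lra).
        replace (a12 * (a13 * e / (8 * a12))) with (a13 * e / 8) in H by (field; lra). lra. }
      assert (X3 : a13 * (e / 2) <= a13 * w c) by (apply Rmult_le_compat_l; lra).
      set (fu := - r1 * (u c - us) - a12 * (v c - vs) - a13 * w c).
      assert (Hfu : fu <= - (a13 * e / 4)). { unfold fu. clear Hm. clearbody fu.
        replace (a13 * (e / 2)) with (a13 * e / 2) in X3 by field.
        replace (- r1 * (u c - us) - a12 * (v c - vs) - a13 * w c) with
          (- (r1 * (u c - us)) - a12 * (v c - vs) - a13 * w c) by ring.
        generalize dependent (r1 * (u c - us)). generalize dependent (a12 * (v c - vs)).
        generalize dependent (a13 * w c). generalize dependent (a13 * e). intros. lra. }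
      assert (Hid : r1 * u c * (1 - u c) - a12 * u c * v c - a13 * u c * w c = u c * fu + u c * (r1 * (1 - us) - a12 * vs))
        by (unfold fu; ring).
      rewrite Hid, E1, Rmult_0_r, Rplus_0_r.
      assert (u c * fu <= us / 2 * fu).
      { assert (0 <= (u c - us / 2) * (- fu)) by (apply Rmult_le_pos; nra). nra. }
      assert (us / 2 * fu <= us / 2 * (- (a13 * e / 4))) by (apply Rmult_le_compat_l; lra).
      lra. }
  split; [|split]; apply lim_of; auto.
  intros e He. destruct (Cw e He) as [T HT]. exists T. intros t Ht. rewrite Rminus_0_r. auto.
Qed.

Theorem theorem1 (r1 r2 mu a12 a13 a21 a31 : R)
  (hr1 : 0 < r1) (hr2 : 0 < r2) (hmu : 0 < mu) (ha12 : 0 < a12)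
  (ha13 : 0 < a13) (ha21 : 0 < a21) (ha31 : 0 < a31)
  (hr1a12 : r1 > a12)
  (hmu_ge : mu >= a31 * u12 r1 r2 a12 a21) :
  let us := u12 r1 r2 a12 a21 in
  let vs := v12 r1 r2 a12 a21 in
  (* existence: E12 lies in the open positive part of the (u,v)-plane *)
  (0 < us /\ 0 < vs) /\
  (* E12 is an equilibrium *)
  (r1 * us * (1 - us) - a12 * us * vs - a13 * us * 0 = 0 /\
   r2 * vs * (1 - vs) + a21 * us * vs = 0 /\
   - mu * 0 + a31 * us * 0 = 0) /\
  (* Lyapunov stability (solutions in the nonnegative orthant) *)
  (forall eps, 0 < eps -> exists delta, 0 < delta /\
     forall u v w : R -> R,
       is_solution r1 r2 mu a12 a13 a21 a31 u v w ->
       0 <= u 0 -> 0 <= v 0 -> 0 <= w 0 ->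
       dist3 (u 0) (v 0) (w 0) us vs 0 < delta ->
       forall t, 0 <= t -> dist3 (u t) (v t) (w t) us vs 0 < eps) /\
  (* global attraction *)
  (forall u v w : R -> R,
     is_solution r1 r2 mu a12 a13 a21 a31 u v w ->
     0 < u 0 -> 0 < v 0 -> 0 <= w 0 ->
     is_lim u p_infty us /\ is_lim v p_infty vs /\ is_lim w p_infty 0).
Proof.
  intros us vs.
  assert (HD : 0 < r1 * r2 + a12 * a21) by nra.
  assert (Hus : 0 < us) by (unfold us, u12; apply Rdiv_lt_0_compat; nra).
  assert (Hvs : 0 < vs) by (unfold vs, v12; apply Rdiv_lt_0_compat; nra).
  assert (E1 : r1 * (1 - us) - a12 * vs = 0) by (unfold us, vs, u12, v12; field; lra).
  assert (E2 : r2 * (1 - vs) + a21 * us = 0) by (unfold us, vs, u12, v12; field; lra).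
  assert (Hmu : a31 * us <= mu) by (unfold us; lra).
  clearbody us vs.
  split; [split; auto|].
  split.
  { split; [|split].
    - transitivity (us * (r1 * (1 - us) - a12 * vs)); [ring|rewrite E1; ring].
    - transitivity (vs * (r2 * (1 - vs) + a21 * us)); [ring|rewrite E2; ring].
    - ring. }
  split.
  - apply stab; auto.
  - intros u v w Hsol Hu0 Hv0 Hw0.
    pose proof (sol_pos _ _ _ _ _ _ _ _ _ _ Hsol Hu0 Hv0 Hw0) as Hpos.
    apply (conv r1 r2 mu a12 a13 a21 a31 us vs u v w).
    unfold Hyp; tauto.
Qed.
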